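(* Let $n\ge1$, $R>0$, $\gamma\in(0,1)$ and $\beta=\frac{2}{2-\gamma}$. Then there exists $U\in C^2((R,\infty))$, positive on $(R,\infty)$, such that $U$ and $U'$ extend continuously to $r=R$ and $$U''+\Big(\frac{n-1}{r}+\frac r2\Big)U'-\frac\beta2U=\gamma U^{\gamma-1}\ \text{ in }(R,\infty),\qquad U(R)=U'(R)=0.$$ *)

(* Defs.v *)
From Stdlib Require Import Reals.
From Coquelicot Require Import Coquelicot.
Open Scope R_scope.

Definition C2_on_open_right (a : R) (U : R -> R) : Prop :=
  forall x, a < x ->
    ex_derive U x /\ ex_derive (Derive U) x /\
    continuous (Derive (Derive U)) x.

(* Main.v *)
Require Import Defs.
From Stdlib Require Import Reals.
From Coquelicot Require Import Coquelicot.
Open Scope R_scope.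
From Stdlib Require Import Lra Lia FunctionalExtensionality.
Open Scope R_scope.

Lemma exp_le' x y : x <= y -> exp x <= exp y.
Proof. intros [H|H]; [left; apply exp_increasing; auto | subst; lra]. Qed.

Lemma Rpower_pos x e : 0 < Rpower x e.
Proof. unfold Rpower; apply exp_pos. Qed.

Lemma Rpower_le_base x y e : 0 <= e -> 0 < x -> x <= y -> Rpower x e <= Rpower y e.
Proof. intros; apply Rle_Rpower_l; auto. Qed.

Lemma Rpower_le_base_neg x y e : e <= 0 -> 0 < x -> x <= y -> Rpower y e <= Rpower x e.
Proof.
  intros He Hx Hxy. unfold Rpower. apply exp_le'.
  assert (ln x <= ln y) by (apply ln_le; auto). nra.
Qed.

Lemma Rpower_le_exp x a b : 1 <= x -> a <= b -> Rpower x a <= Rpower x b.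
Proof. intros; apply Rle_Rpower; auto. Qed.

Lemma Rpower_inv_exp a e : 0 < a -> 0 < e -> Rpower (Rpower a (/ e)) e = a.
Proof.
  intros. rewrite Rpower_mult. replace (/ e * e) with 1 by (field; lra).
  apply Rpower_1; auto.
Qed.

Lemma ball_R (x y : R) (eps : R) : ball x eps y <-> Rabs (y - x) < eps.
Proof. split; intro H; exact H. Qed.

Lemma locally_gt a x : a < x -> locally x (fun t => a < t).
Proof.
  intros H. assert (Hp : 0 < x - a) by lra.
  exists (mkposreal _ Hp). intros y Hy. assert (Hy' : Rabs (y - x) < pos (mkposreal _ Hp)) by exact Hy. simpl in Hy'.
  apply Rabs_lt_between in Hy'. lra.
Qed.

Lemma locally_lt a x : x < a -> locally x (fun t => t < a).
Proof.
  intros H. assert (Hp : 0 < a - x) by lra.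
  exists (mkposreal _ Hp). intros y Hy. assert (Hy' : Rabs (y - x) < pos (mkposreal _ Hp)) by exact Hy. simpl in Hy'.
  apply Rabs_lt_between in Hy'. lra.
Qed.

Lemma cont_eps (f : R -> R) x :
  (forall eps, 0 < eps -> exists d, 0 < d /\
     forall y, Rabs (y - x) < d -> Rabs (f y - f x) < eps) -> continuous f x.
Proof.
  intros H. apply continuity_pt_filterlim.
  unfold continuity_pt, continue_in, limit1_in, limit_in. simpl. unfold R_dist.
  intros eps Heps. destruct (H eps Heps) as [d [Hd Hy]].
  exists d; split; auto. intros y [_ Hy']. apply Hy. exact Hy'.
Qed.

Lemma cont_ext_loc (f g : R -> R) x :
  locally x (fun t => g t = f t) -> continuous g x -> continuous f x.
Proof. apply continuous_ext_loc. Qed.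

Lemma mono_deriv (F dF : R -> R) a b : a <= b ->
  (forall x, a <= x <= b -> continuous F x) ->
  (forall x, a < x < b -> is_derive F x (dF x)) ->
  (forall x, a < x < b -> 0 <= dF x) -> F a <= F b.
Proof.
  intros Hab Hc Hd Hpos.
  set (dG := fun x => if Rlt_dec a x then (if Rlt_dec x b then dF x else 0) else 0).
  destruct (MVT_gen F a b dG) as [c [Hc1 Hc2]].
  - rewrite Rmin_left, Rmax_right by lra. intros x Hx.
    unfold dG. destruct (Rlt_dec a x); [|lra]. destruct (Rlt_dec x b); [|lra]. apply Hd; lra.
  - rewrite Rmin_left, Rmax_right by lra. intros x Hx.
    apply continuity_pt_filterlim. apply Hc; lra.
  - assert (0 <= dG c).
    { unfold dG. destruct (Rlt_dec a c); [|lra]. destruct (Rlt_dec c b); [|lra]. apply Hpos; lra. }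
    nra.
Qed.

Definition pw (x e : R) : R := if Rlt_dec 0 x then Rpower x e else 0.

Lemma pw_pos x e : 0 < x -> pw x e = Rpower x e.
Proof. intros H; unfold pw; destruct (Rlt_dec 0 x); [auto|lra]. Qed.

Lemma pw_npos x e : x <= 0 -> pw x e = 0.
Proof. intros H; unfold pw; destruct (Rlt_dec 0 x); [lra|auto]. Qed.

Lemma pw_ge0 x e : 0 <= pw x e.
Proof. unfold pw; destruct (Rlt_dec 0 x); [left; apply Rpower_pos|lra]. Qed.

Lemma pw_gt0 x e : 0 < x -> 0 < pw x e.
Proof. intros; rewrite pw_pos by auto; apply Rpower_pos. Qed.

Lemma is_derive_Rpower x e : 0 < x -> is_derive (fun t => Rpower t e) x (e * Rpower x (e - 1)).
Proof. intros H. apply is_derive_Reals. apply derivable_pt_lim_power; auto. Qed.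

Lemma is_derive_pw x e : 0 < x -> is_derive (fun t => pw t e) x (e * Rpower x (e - 1)).
Proof.
  intros H. apply is_derive_ext_loc with (fun t => Rpower t e).
  - generalize (locally_gt 0 x H). apply filter_imp. intros t Ht. rewrite pw_pos; auto.
  - apply is_derive_Rpower; auto.
Qed.

Lemma cont_Rpower x e : 0 < x -> continuous (fun t => Rpower t e) x.
Proof. intros H. apply (@ex_derive_continuous R_AbsRing R_NormedModule). eexists. apply is_derive_Rpower; auto. Qed.

Lemma cont0_squeeze (f : R -> R) e M d : 0 < e -> 0 < d -> 0 <= M ->
  (forall x, x <= 0 -> f x = 0) ->
  (forall x, 0 < x <= d -> Rabs (f x) <= M * Rpower x e) -> continuous f 0.
Proof.
  intros He Hd HM Hneg Hb. apply cont_eps. intros eps Heps.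
  assert (Ha : 0 < eps / (M + 1)) by (apply Rdiv_lt_0_compat; lra).
  set (d2 := Rpower (eps / (M + 1)) (/ e)).
  assert (Hd2 : 0 < d2) by apply Rpower_pos.
  exists (Rmin d d2). split. { apply Rmin_pos; auto. }
  intros y Hy. rewrite (Hneg 0) by lra. rewrite Rminus_0_r in *.
  destruct (Rle_dec y 0) as [Hy0|Hy0].
  - rewrite Hneg by auto. rewrite Rabs_R0. auto.
  - assert (Hyp : 0 < y) by lra. rewrite Rabs_pos_eq in Hy by lra.
    eapply Rle_lt_trans. apply Hb. split; auto. apply Rlt_le, Rlt_le_trans with (1 := Hy), Rmin_l.
    assert (Rpower y e <= eps / (M + 1)).
    { rewrite <- (Rpower_inv_exp (eps / (M+1)) e) by auto.
      apply Rpower_le_base; try lra. fold d2. apply Rlt_le, Rlt_le_trans with (1 := Hy), Rmin_r. }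
    assert (M * Rpower y e <= M * (eps / (M + 1))) by (apply Rmult_le_compat_l; auto).
    assert (M * (eps / (M+1)) < eps).
    { unfold Rdiv. apply Rmult_lt_reg_r with (M + 1); [lra|].
      rewrite Rmult_assoc, (Rmult_assoc eps), Rinv_l by lra. nra. }
    lra.
Qed.

Lemma cont_pw x e : 0 < e -> continuous (fun t => pw t e) x.
Proof.
  intros He. destruct (Rlt_dec 0 x) as [H|H].
  - apply cont_ext_loc with (fun t => Rpower t e).
    + generalize (locally_gt 0 x H). apply filter_imp. intros t Ht. rewrite pw_pos; auto.
    + apply cont_Rpower; auto.
  - destruct (Rlt_dec x 0) as [H'|H'].
    + apply cont_ext_loc with (fun _ => 0).
      * generalize (locally_lt 0 x H'). apply filter_imp. intros t Ht. rewrite pw_npos; auto; lra.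
      * apply continuous_const.
    + assert (x = 0) by lra. subst.
      apply (cont0_squeeze _ e 1 1); auto; try lra.
      * intros; apply pw_npos; auto.
      * intros y Hy. rewrite pw_pos by lra. rewrite Rabs_pos_eq by (left; apply Rpower_pos). lra.
Qed.

Lemma Rpower_lip x y l e : -1 < e -> e < 0 -> 0 < l -> l <= x -> l <= y ->
  Rabs (Rpower x e - Rpower y e) <= - e * Rpower l (e - 1) * Rabs (x - y).
Proof.
  intros He1 He2 Hl Hx Hy.
  destruct (MVT_gen (fun t => Rpower t e) y x (fun t => e * Rpower t (e - 1))) as [c [Hc Heq]].
  - intros t Ht. apply is_derive_Rpower.
    assert (l <= Rmin y x) by (apply Rmin_glb; auto). lra.
  - intros t Ht. apply continuity_pt_filterlim. apply cont_Rpower.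
    assert (l <= Rmin y x) by (apply Rmin_glb; auto). lra.
  - simpl in Heq. rewrite Heq.
    assert (Hlc : l <= c) by (assert (l <= Rmin y x) by (apply Rmin_glb; auto); lra).
    assert (Rpower c (e - 1) <= Rpower l (e - 1)) by (apply Rpower_le_base_neg; lra).
    assert (0 < Rpower c (e-1)) by apply Rpower_pos.
    rewrite Rabs_mult, Rabs_mult. rewrite (Rabs_left e) by lra.
    rewrite (Rabs_pos_eq (Rpower c (e-1))) by lra.
    apply Rmult_le_compat_r. apply Rabs_pos. nra.
Qed.

Lemma isd_plus (f g : R -> R) x df dg : is_derive f x df -> is_derive g x dg ->
  is_derive (fun t => f t + g t) x (df + dg).
Proof. intros; apply (is_derive_plus f g); auto. Qed.
Lemma isd_minus (f g : R -> R) x df dg : is_derive f x df -> is_derive g x dg ->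
  is_derive (fun t => f t - g t) x (df - dg).
Proof. intros; apply (is_derive_minus f g); auto. Qed.
Lemma isd_mult (f g : R -> R) x df dg : is_derive f x df -> is_derive g x dg ->
  is_derive (fun t => f t * g t) x (df * g x + f x * dg).
Proof. intros; apply (is_derive_mult f g); auto. intros; apply Rmult_comm. Qed.
Lemma isd_scal (f : R -> R) c x df : is_derive f x df -> is_derive (fun t => c * f t) x (c * df).
Proof. intros; apply is_derive_scal; auto. Qed.
Lemma isd_const (c x : R) : is_derive (fun _ => c) x 0.
Proof. apply (is_derive_const c x). Qed.
Lemma isd_id (x : R) : is_derive (fun t => t) x 1.
Proof. apply (is_derive_id x). Qed.
Lemma isd_inv (f : R -> R) x df : is_derive f x df -> f x <> 0 ->
  is_derive (fun t => / f t) x (- df / (f x)^2).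
Proof. intros; apply is_derive_inv; auto. Qed.
Lemma isd_comp (f g : R -> R) x df dg : is_derive f (g x) df -> is_derive g x dg ->
  is_derive (fun t => f (g t)) x (df * dg).
Proof. intros H1 H2. generalize (is_derive_comp f g x df dg H1 H2).
  intros H. replace (df * dg) with (scal dg df); [exact H|].
  change (dg * df = df * dg). ring. Qed.
Lemma isd_eq (f : R -> R) (x l lp : R) : is_derive f x l -> l = lp -> is_derive f x lp.
Proof. intros H ->; auto. Qed.
Lemma isd_cont (f : R -> R) x l : is_derive f x l -> continuous f x.
Proof. intros H. apply (@ex_derive_continuous R_AbsRing R_NormedModule). exists l; auto. Qed.

Lemma isd_exp (f : R -> R) x df : is_derive f x df -> is_derive (fun t => exp (f t)) x (exp (f x) * df).
Proof. intros H. apply (isd_comp exp f x (exp (f x)) df); auto. apply is_derive_exp. Qed.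

Ltac is_const f := let c := eval cbv beta in (f 0) in let c' := eval cbv beta in (f 1) in constr_eq c c'.

Ltac dtac := match goal with
 | |- is_derive ?f _ _ => is_const f; apply isd_const
 | |- is_derive (fun t => exp (@?f t)) _ _ => apply (isd_exp f); dtac
 | |- is_derive (fun t => pw t ?e) _ _ => apply is_derive_pw
 | |- is_derive (fun t => @?f t + @?g t) _ _ => apply (isd_plus f g); dtac
 | |- is_derive (fun t => @?f t - @?g t) _ _ => apply (isd_minus f g); dtac
 | |- is_derive (fun t => @?f t * @?g t) _ _ => apply (isd_mult f g); dtac
 | |- is_derive (fun t => / @?f t) _ _ => apply (isd_inv f); [dtac|]
 | |- is_derive (fun t => t) _ _ => apply isd_id
 | _ => idtac
end.
Ltac dtac0 := eapply isd_eq; [dtac|].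

Lemma ex_RInt_all (f : R -> R) a b : (forall x, continuous f x) -> ex_RInt f a b.
Proof. intros H. apply (@ex_RInt_continuous R_CompleteNormedModule). intros; apply H. Qed.

Lemma FTC_all (f : R -> R) a x : (forall y, continuous f y) ->
  is_derive (fun y => RInt f a y) x (f x).
Proof.
  intros H. apply (is_derive_RInt f (fun y => RInt f a y) a x).
  - exists (mkposreal 1 Rlt_0_1). intros y _. apply (RInt_correct f a y). apply ex_RInt_all; auto.
  - apply H.
Qed.

Lemma cont_RInt_all (f : R -> R) a x : (forall y, continuous f y) ->
  continuous (fun y => RInt f a y) x.
Proof. intros H. eapply isd_cont. apply FTC_all; auto. Qed.

Lemma cnt_plus (f g : R -> R) x : continuous f x -> continuous g x -> continuous (fun t => f t + g t) x.
Proof. intros; apply (continuous_plus f g); auto. Qed.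
Lemma cnt_opp (f : R -> R) x : continuous f x -> continuous (fun t => - f t) x.
Proof. intros; apply (continuous_opp f); auto. Qed.
Lemma cnt_minus (f g : R -> R) x : continuous f x -> continuous g x -> continuous (fun t => f t - g t) x.
Proof. intros; apply (continuous_minus f g); auto. Qed.
Lemma cnt_mult (f g : R -> R) x : continuous f x -> continuous g x -> continuous (fun t => f t * g t) x.
Proof. intros; apply (continuous_mult f g); auto. Qed.
Lemma cnt_const (c x : R) : continuous (fun _ => c) x.
Proof. apply continuous_const. Qed.
Lemma cnt_id (x : R) : continuous (fun t => t) x.
Proof. apply continuous_id. Qed.
Lemma cnt_exp (f : R -> R) x : continuous f x -> continuous (fun t => exp (f t)) x.
Proof. intros H. apply (continuous_comp f exp); auto. apply (isd_cont exp (f x) (exp (f x))). apply is_derive_exp. Qed.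
Lemma cnt_inv (f : R -> R) x : continuous f x -> f x <> 0 -> continuous (fun t => / f t) x.
Proof.
  intros H1 H2. apply (continuous_comp f Rinv); auto.
  apply (isd_cont Rinv (f x) (- 1 / (f x)^2)).
  apply (isd_eq _ _ (- 1 / (f x)^2)). apply (isd_inv (fun t => t)). apply isd_id. auto. auto.
Qed.
Lemma cnt_Rpower (f : R -> R) e x : continuous f x -> 0 < f x -> continuous (fun t => Rpower (f t) e) x.
Proof. intros H1 H2. apply (continuous_comp f (fun t => Rpower t e)); auto. apply cont_Rpower; auto. Qed.



Lemma Rpower_S x e : 0 < x -> Rpower x (e + 1) = Rpower x e * x.
Proof. intros H. rewrite Rpower_plus, Rpower_1; auto. Qed.

Lemma Rpower_le_small t a b : 0 < t -> t <= 1 -> a <= b -> Rpower t b <= Rpower t a.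
Proof.
  intros H1 H2 H3. unfold Rpower. apply exp_le'.
  assert (ln t <= 0). { rewrite <- ln_1. apply ln_le; lra. }
  nra.
Qed.

Lemma Rpower_2 x : 0 < x -> Rpower x 2 = x ^ 2.
Proof. intros H. replace 2 with (INR 2) by (simpl; ring). apply Rpower_pow; auto. Qed.

Lemma cnt_abs (f : R -> R) x : continuous f x -> continuous (fun t => Rabs (f t)) x.
Proof. intros H. apply (continuous_comp f Rabs); auto. apply continuous_Rabs. Qed.

Lemma abs_deriv_bound (D P dD dP : R -> R) s : 0 <= s -> D 0 = 0 -> P 0 = 0 ->
  (forall x, 0 <= x <= s -> continuous D x) -> (forall x, 0 <= x <= s -> continuous P x) ->
  (forall x, 0 < x < s -> is_derive D x (dD x)) -> (forall x, 0 < x < s -> is_derive P x (dP x)) ->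
  (forall x, 0 < x < s -> Rabs (dD x) <= dP x) -> Rabs (D s) <= P s.
Proof.
  intros Hs HD HP HcD HcP HdD HdP Hb.
  assert (H1 : (fun x => P x - D x) 0 <= (fun x => P x - D x) s).
  { apply (mono_deriv (fun x => P x - D x) (fun x => dP x - dD x)); auto.
    - intros. apply cnt_minus; auto.
    - intros. apply isd_minus; auto.
    - intros x Hx. generalize (Hb x Hx). intros H. apply Rabs_le_between in H. lra. }
  assert (H2 : (fun x => P x + D x) 0 <= (fun x => P x + D x) s).
  { apply (mono_deriv (fun x => P x + D x) (fun x => dP x + dD x)); auto.
    - intros. apply cnt_plus; auto.
    - intros. apply isd_plus; auto.
    - intros x Hx. generalize (Hb x Hx). intros H. apply Rabs_le_between in H. lra. }
  simpl in *. apply Rabs_le_between. lra.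
Qed.

Ltac ctac := match goal with
 | |- continuous ?f _ => is_const f; apply cnt_const
 | |- continuous (fun t => @?f t + @?g t) _ => apply (cnt_plus f g); ctac
 | |- continuous (fun t => @?f t - @?g t) _ => apply (cnt_minus f g); ctac
 | |- continuous (fun t => @?f t * @?g t) _ => apply (cnt_mult f g); ctac
 | |- continuous (fun t => - @?f t) _ => apply (cnt_opp f); ctac
 | |- continuous (fun t => / @?f t) _ => apply (cnt_inv f); [ctac|]
 | |- continuous (fun t => exp (@?f t)) _ => apply (cnt_exp f); ctac
 | |- continuous (fun t => pw t ?e) _ => apply cont_pw
 | |- continuous (fun t => Rpower (@?f t) ?e) _ => apply (cnt_Rpower f); [ctac|]
 | |- continuous (fun t => Rabs (@?f t)) _ => apply (cnt_abs f); ctac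
 | |- continuous (fun t => t) _ => apply cnt_id
 | _ => idtac
end.

Lemma RInt_scal_R (f : R -> R) c a b : ex_RInt f a b -> RInt (fun y => c * f y) a b = c * RInt f a b.
Proof. intros H. apply (RInt_scal f a b c H). Qed.

Lemma RInt_minus_R (f g : R -> R) a b : ex_RInt f a b -> ex_RInt g a b ->
  RInt (fun y => f y - g y) a b = RInt f a b - RInt g a b.
Proof. intros H1 H2. apply (RInt_minus f g a b H1 H2). Qed.

Lemma cont_eps_inv (f : R -> R) x : continuous f x ->
  forall eps, 0 < eps -> exists d, 0 < d /\ forall y, Rabs (y - x) < d -> Rabs (f y - f x) < eps.
Proof.
  intros H eps Heps. apply continuity_pt_filterlim in H.
  unfold continuity_pt, continue_in, limit1_in, limit_in in H. simpl in H. unfold R_dist in H.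
  destruct (H eps Heps) as [d [Hd Hy]]. exists d; split; auto.
  intros y Hyx. destruct (Req_dec y x) as [->|Hne].
  - rewrite Rminus_diag, Rabs_R0; auto.
  - apply Hy. split; auto. unfold D_x, no_cond. split; auto.
Qed.

Lemma geo_small M eps : 0 < eps -> exists N : nat, forall j, (N <= j)%nat -> M * (/ 2) ^ j < eps.
Proof.
  intros He. destruct (pow_lt_1_zero (/ 2)) with (y := eps / (Rabs M + 1)) as [N HN].
  rewrite Rabs_pos_eq by lra. lra. apply Rdiv_lt_0_compat; auto. generalize (Rabs_pos M); lra.
  exists N. intros j Hj. specialize (HN j Hj).
  assert (0 < (/2)^j) by (apply pow_lt; lra).
  rewrite Rabs_pos_eq in HN by lra.
  assert (M * (/2)^j <= Rabs M * (/2)^j) by (apply Rmult_le_compat_r; [lra| apply Rle_abs]).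
  assert (Rabs M * (/ 2) ^ j <= Rabs M * (eps / (Rabs M + 1))) by (apply Rmult_le_compat_l; [apply Rabs_pos|lra]).
  assert (Rabs M * (eps / (Rabs M + 1)) < eps).
  { generalize (Rabs_pos M); intro. apply Rmult_lt_reg_r with (Rabs M + 1). lra.
    field_simplify; lra. }
  lra.
Qed.

Lemma small_geo z M : (forall j : nat, z <= M * (/ 2) ^ j) -> z <= 0.
Proof.
  intros H. destruct (Rle_dec z 0) as [|Hz]; auto.
  destruct (geo_small M z) as [N HN]. lra.
  specialize (H N). specialize (HN N (le_n N)). lra.
Qed.

Lemma lim_bound (u : nat -> R) (l c b : R) j : is_lim_seq u l ->
  (forall m, (j <= m)%nat -> Rabs (u m - c) <= b) -> Rabs (l - c) <= b.
Proof.
  intros Hl Hb. destruct (Rle_dec (Rabs (l - c)) b) as [|Hn]; auto.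
  exfalso. apply is_lim_seq_spec in Hl.
  assert (Hl' : forall eps : posreal, eventually (fun n => Rabs (u n - l) < eps)) by exact Hl. clear Hl.
  assert (Hp : 0 < Rabs (l - c) - b) by lra.
  destruct (Hl' (mkposreal _ Hp)) as [N HN]. simpl in HN.
  specialize (HN (max N j) (Nat.le_max_l _ _)). specialize (Hb (max N j) (Nat.le_max_r _ _)).
  assert (Rabs (l - c) <= Rabs (l - u (max N j)) + Rabs (u (max N j) - c)).
  { replace (l - c) with ((l - u (max N j)) + (u (max N j) - c)) by ring. apply Rabs_triang. }
  rewrite (Rabs_minus_sym l (u _)) in H. lra.
Qed.

Lemma cauchy_lim (u : nat -> R) :
  (forall eps, 0 < eps -> exists N, forall n m, (N <= n)%nat -> (N <= m)%nat -> Rabs (u n - u m) < eps) ->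
  is_lim_seq u (real (Lim_seq u)).
Proof.
  intros H. assert (Hc : ex_lim_seq_cauchy u).
  { intros eps. destruct (H eps (cond_pos eps)) as [N HN]. exists N; auto. }
  apply ex_lim_seq_cauchy_corr in Hc. destruct Hc as [l Hl].
  rewrite (is_lim_seq_unique u l Hl). simpl. auto.
Qed.

Lemma at_right_cont (f g : R -> R) : continuous f 0 -> f 0 = 0 ->
  (forall t, 0 < t -> g t = f t) -> filterlim g (at_right 0) (locally 0).
Proof.
  intros Hc H0 He. apply filterlim_locally. intros eps.
  destruct (cont_eps_inv f 0 Hc eps (cond_pos eps)) as [d [Hd Hy]].
  exists (mkposreal d Hd). intros y Hy1 Hy2. simpl in Hy1.
  assert (Hb : Rabs (y - 0) < d) by exact Hy1.
  specialize (Hy y Hb). rewrite H0, Rminus_0_r in Hy. rewrite He by auto.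
  change (Rabs (f y - 0) < eps). rewrite Rminus_0_r. auto.
Qed.

Lemma pow_half_le1 j : (/ 2) ^ j <= 1.
Proof. induction j; simpl. lra. assert (0 < (/2)^j) by (apply pow_lt; lra). lra. Qed.

Section Main.
Variables (nn Rad gam : R).
Hypotheses (Hnn : 0 <= nn) (HR : 0 < Rad) (Hg0 : 0 < gam) (Hg1 : gam < 1).

Definition bet := 2 / (2 - gam).

Lemma bet_gt1 : 1 < bet.
Proof. unfold bet. apply Rmult_lt_reg_r with (2 - gam); [lra|]. field_simplify; lra. Qed.
Lemma bet_lt2 : bet < 2.
Proof. unfold bet. apply Rmult_lt_reg_r with (2 - gam); [lra|]. field_simplify; lra. Qed.
Lemma bet_id1 : bet * (gam - 1) = bet - 2.
Proof. unfold bet. field. lra. Qed.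
Lemma bet_id2 : bet * (gam - 2) = -2.
Proof. unfold bet. field. lra. Qed.

Definition Aq := gam / (bet * (bet - 1)).
Lemma Aq_pos : 0 < Aq.
Proof. unfold Aq. generalize bet_gt1; intro. apply Rdiv_lt_0_compat; nra. Qed.

Definition A := Rpower Aq (/ (2 - gam)).
Lemma A_pos : 0 < A.
Proof. apply Rpower_pos. Qed.

Lemma A_id0 : Rpower A (gam - 2) = / Aq.
Proof.
  unfold A. rewrite Rpower_mult. replace (/ (2 - gam) * (gam - 2)) with (- (1)) by (field; lra).
  rewrite Rpower_Ropp, Rpower_1; auto using Aq_pos.
Qed.

Lemma A_id : gam * Rpower A (gam - 1) = A * bet * (bet - 1).
Proof.
  replace (gam - 1) with (1 + (gam - 2)) by ring. rewrite Rpower_plus, Rpower_1 by apply A_pos.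
  rewrite A_id0. unfold Aq. generalize bet_gt1; intro. field. split; lra.
Qed.

Definition Phi t := nn * ln (Rad + t) + (Rad + t) ^ 2 / 4.
Definition w t := exp (Phi t).
Definition dPhi t := nn / (Rad + t) + (Rad + t) / 2.
Definition w0 := w 0.
Definition a1 s := nn / Rad + (Rad + s) / 2.

Lemma w_pos t : 0 < w t.
Proof. apply exp_pos. Qed.

Lemma is_derive_w t : 0 <= t -> is_derive w t (w t * dPhi t).
Proof.
  intros Ht. unfold w, dPhi, Phi.
  auto_derive.
  - lra.
  - replace (exp (nn * ln (Rad + t) + (Rad + t) * ((Rad + t) * 1) * / 4)) with
      (exp (nn * ln (Rad + t) + (Rad + t) ^ 2 / 4)) by (f_equal; field).
    field. lra.
Qed.

Lemma Phi_mono x y : 0 <= x -> x <= y -> Phi x <= Phi y.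
Proof.
  intros Hx Hxy. unfold Phi.
  assert (ln (Rad + x) <= ln (Rad + y)) by (apply ln_le; lra).
  assert ((Rad + x)^2 <= (Rad + y)^2) by (apply pow_incr; lra).
  nra.
Qed.

Lemma w_mono x y : 0 <= x -> x <= y -> w x <= w y.
Proof. intros; unfold w; apply exp_le'; apply Phi_mono; auto. Qed.

Lemma dPhi_pos t : 0 <= t -> 0 < dPhi t.
Proof.
  intros Ht. unfold dPhi. assert (0 <= nn / (Rad + t)) by (apply Rdiv_le_0_compat; lra). lra.
Qed.

Lemma dPhi_le t s : 0 <= t -> t <= s -> dPhi t <= a1 s.
Proof.
  intros Ht Hts. unfold dPhi, a1.
  assert (nn / (Rad + t) <= nn / Rad).
  { unfold Rdiv. apply Rmult_le_compat_l; auto. apply Rinv_le_contravar; lra. }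
  lra.
Qed.

Lemma cont_w t : 0 <= t -> continuous w t.
Proof.
  intros Ht. apply (@ex_derive_continuous R_AbsRing R_NormedModule). eexists. apply is_derive_w; auto.
Qed.

Lemma w_diff tau s : 0 <= tau -> tau <= s -> 0 <= w tau - w0 <= tau * w s * a1 s.
Proof.
  intros Ht Hts. split.
  - unfold w0. assert (w 0 <= w tau) by (apply w_mono; lra). lra.
  - set (F := fun x => x * w s * a1 s - (w x - w0)).
    assert (HF : forall x, 0 <= x -> is_derive F x (w s * a1 s - w x * dPhi x)).
    { intros x Hx. unfold F. dtac0. all: try (apply is_derive_w; auto). all: try ring. }
    assert (F 0 <= F tau).
    { apply (mono_deriv F (fun x => w s * a1 s - w x * dPhi x)); auto.
      - intros x Hx. apply isd_cont with (1 := HF x ltac:(lra)).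
      - intros x Hx. apply HF. lra.
      - intros x Hx.
        assert (w x <= w s) by (apply w_mono; lra).
        assert (dPhi x <= a1 s) by (apply dPhi_le; lra).
        assert (0 < dPhi x) by (apply dPhi_pos; lra).
        assert (0 < w x) by apply w_pos.
        nra. }
    unfold F in H. unfold w0 in *. lra.
Qed.


Lemma w0_pos : 0 < w0.
Proof. apply w_pos. Qed.

Definition c1 := gam * Rpower A (gam - 1) * w0 / (bet - 1).
Lemma c1_eq : c1 = A * bet * w0.
Proof. unfold c1. rewrite A_id. generalize bet_gt1; intro. field. lra. Qed.
Lemma c1_pos : 0 < c1.
Proof. rewrite c1_eq. generalize A_pos w0_pos bet_gt1; intros. apply Rmult_lt_0_compat; [|auto]. nra. Qed.

Definition k := gam * (1 - gam) * Rpower (A / 2) (gam - 2).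
Lemma k_pos : 0 < k.
Proof. unfold k. generalize (Rpower_pos (A/2) (gam - 2)); intro. apply Rmult_lt_0_compat; nra. Qed.

Lemma k_bound : k <= (bet + 1) * bet / 2.
Proof.
  unfold k.
  assert (HA : Rpower A (gam - 2) = Rpower (A/2) (gam - 2) * Rpower 2 (gam - 2)).
  { rewrite Rpower_mult_distr. f_equal. field. generalize A_pos; intro. lra. lra. }
  assert (H2 : / 4 <= Rpower 2 (gam - 2)).
  { replace (/ 4) with (Rpower 2 (- INR 2)). apply Rle_Rpower. lra. simpl. lra.
    rewrite Rpower_Ropp, Rpower_pow by lra. simpl. field. }
  rewrite A_id0 in HA. unfold Aq in HA.
  generalize (Rpower_pos (A/2) (gam - 2)) (Rpower_pos 2 (gam - 2)) bet_gt1; intros.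
  assert (Hle : Rpower (A / 2) (gam - 2) <= 4 * (bet * (bet - 1) / gam)).
  { assert (Rpower (A/2) (gam-2) * Rpower 2 (gam-2) = bet * (bet - 1) / gam).
    { rewrite <- HA. field. split; lra. }
    nra. }
  assert (gam * (1 - gam) * Rpower (A / 2) (gam - 2) <= 4 * (1 - gam) * bet * (bet - 1)).
  { apply Rle_trans with (gam * (1 - gam) * (4 * (bet * (bet - 1) / gam))).
    apply Rmult_le_compat_l; nra. right; field; lra. }
  assert (8 * (1 - gam) * (bet - 1) <= bet + 1).
  { unfold bet. apply Rmult_le_reg_r with (2 - gam). lra.
    field_simplify; try lra. nra. }
  nra.
Qed.

Definition C0 := 1 + (c1 / w0 + gam * Rpower A (gam - 1)) * (nn / Rad + Rad / 2 + 1 / 2) + bet * A / 2.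
Lemma X_nonneg : 0 <= c1 / w0 + gam * Rpower A (gam - 1).
Proof.
  generalize c1_pos w0_pos (Rpower_pos A (gam - 1)); intros.
  assert (0 < c1 / w0) by (apply Rdiv_lt_0_compat; auto). nra.
Qed.
Lemma C0_ge1 : 1 <= C0.
Proof.
  unfold C0. generalize X_nonneg A_pos bet_gt1; intros.
  assert (0 <= nn / Rad) by (apply Rdiv_le_0_compat; lra).
  assert (0 <= (c1 / w0 + gam * Rpower A (gam - 1)) * (nn / Rad + Rad / 2 + 1 / 2)) by (apply Rmult_le_pos; lra).
  nra.
Qed.

Definition kap := 1 + bet / 2 + k.
Lemma kap_ge1 : 1 <= kap.
Proof. unfold kap. generalize bet_gt1 k_pos; intros; lra. Qed.

Definition s0 := Rmin 1 (A / (4 * C0 * exp kap)).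
Lemma s0_pos : 0 < s0.
Proof.
  unfold s0. apply Rmin_pos. lra. generalize A_pos C0_ge1 (exp_pos kap); intros.
  apply Rdiv_lt_0_compat; auto. nra.
Qed.
Lemma s0_le1 : s0 <= 1.
Proof. apply Rmin_l. Qed.
Lemma s0_small : 4 * C0 * exp kap * s0 <= A.
Proof.
  generalize A_pos C0_ge1 (exp_pos kap); intros.
  assert (s0 <= A / (4 * C0 * exp kap)) by apply Rmin_r.
  assert (0 < 4 * C0 * exp kap) by nra.
  apply Rmult_le_compat_l with (r := 4 * C0 * exp kap) in H2; [|lra].
  replace (4 * C0 * exp kap * (A / (4 * C0 * exp kap))) with A in H2 by (field; lra). lra.
Qed.

Definition K := kap / s0.
Lemma K_s0 : K * s0 = kap.
Proof. unfold K. generalize s0_pos; intro. field. lra. Qed.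
Lemma K_ge1 : 1 <= K.
Proof.
  generalize s0_pos s0_le1 kap_ge1 K_s0; intros.
  destruct (Rle_dec 1 K); auto. nra.
Qed.

Definition B := bet / 2 + k / s0 ^ 2.
Lemma B_le : B <= K ^ 2 / 2.
Proof.
  unfold B. generalize s0_pos s0_le1 kap_ge1 K_s0 k_pos bet_gt1; intros.
  assert (K = kap / s0) by reflexivity.
  assert (bet / 2 <= bet / 2 / s0 ^ 2).
  { apply Rmult_le_reg_r with (s0^2). nra. field_simplify; try lra. assert (s0^2 <= 1) by nra. nra. }
  assert (bet / 2 / s0 ^ 2 + k / s0 ^ 2 <= K ^ 2 / 2).
  { rewrite H5. apply Rmult_le_reg_r with (s0^2). nra. field_simplify; try lra.
    unfold kap. nra. }
  lra.
Qed.


Definition rho t := pw t (bet + 1) * exp (K * t).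
Definition drho t := ((bet + 1) * pw t bet + K * pw t (bet + 1)) * exp (K * t).
Definition d2rho t := ((bet + 1) * bet * pw t (bet - 1) + 2 * K * (bet + 1) * pw t bet
                        + K ^ 2 * pw t (bet + 1)) * exp (K * t).
Definition hh t := exp (K * t) * (B * pw t (bet + 1) + k * pw t (bet - 1)).

Ltac pwpos := repeat rewrite pw_pos by lra.

Lemma rho_der t : 0 < t -> is_derive rho t (drho t).
Proof.
  intros Ht. unfold rho, drho. dtac0. lra. pwpos.
  replace (bet + 1 - 1) with bet by ring. ring.
Qed.

Lemma drho_der t : 0 < t -> is_derive drho t (d2rho t).
Proof.
  intros Ht. unfold drho, d2rho. dtac0. all: try lra. pwpos.
  replace (bet + 1 - 1) with bet by ring. ring.
Qed.

Lemma cont_rho t : continuous rho t.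
Proof. unfold rho. generalize bet_gt1; intro. ctac; lra. Qed.
Lemma cont_drho t : continuous drho t.
Proof. unfold drho. generalize bet_gt1; intro. ctac; lra. Qed.
Lemma cont_hh t : continuous hh t.
Proof. unfold hh. generalize bet_gt1; intro. ctac; lra. Qed.

Lemma rho0 : rho 0 = 0.
Proof. unfold rho. rewrite pw_npos by lra. ring. Qed.
Lemma drho0 : drho 0 = 0.
Proof. unfold drho. rewrite !pw_npos by lra. ring. Qed.
Lemma rho_nonneg t : 0 <= rho t.
Proof. unfold rho. generalize (pw_ge0 t (bet+1)) (exp_pos (K*t)); intros. nra. Qed.

Lemma pw_mono x y e : 0 <= e -> 0 <= x -> x <= y -> pw x e <= pw y e.
Proof.
  intros He Hx Hxy. destruct (Rlt_dec 0 x).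
  - rewrite !pw_pos by lra. apply Rpower_le_base; lra.
  - rewrite (pw_npos x) by lra. apply pw_ge0.
Qed.

Lemma rho_mono x y : 0 <= x -> x <= y -> rho x <= rho y.
Proof.
  intros Hx Hxy. unfold rho. generalize K_ge1 bet_gt1; intros.
  assert (pw x (bet+1) <= pw y (bet+1)) by (apply pw_mono; lra).
  assert (exp (K*x) <= exp (K*y)) by (apply exp_le'; nra).
  generalize (pw_ge0 x (bet+1)) (exp_pos (K*x)); intros. nra.
Qed.

Lemma hint_le t : 0 <= t -> RInt hh 0 t <= drho t / 2.
Proof.
  intros Ht. set (G := fun x => drho x / 2 - RInt hh 0 x).
  assert (G 0 <= G t).
  { apply (mono_deriv G (fun x => d2rho x / 2 - hh x)); auto.
    - intros x Hx. unfold G. apply cnt_minus.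
      + apply (cnt_mult drho (fun _ => / 2)). apply cont_drho. apply cnt_const.
      + apply cont_RInt_all. apply cont_hh.
    - intros x Hx. unfold G. unfold Rdiv.
      apply isd_eq with (d2rho x * / 2 - hh x); [|ring].
      apply (isd_minus (fun t => drho t * / 2) (fun t => RInt hh 0 t)).
      + apply isd_eq with (d2rho x * / 2 + drho x * 0); [|ring].
        apply (isd_mult drho (fun _ => / 2)). apply drho_der; lra. apply isd_const.
      + apply FTC_all. apply cont_hh.
    - intros x Hx. unfold d2rho, hh. pwpos.
      generalize k_bound B_le K_ge1 bet_gt1 (exp_pos (K * x)) (Rpower_pos x (bet - 1))
        (Rpower_pos x bet) (Rpower_pos x (bet + 1)); intros.
      assert (0 <= (bet + 1) * bet / 2 - k) by lra.
      assert (0 <= K^2/2 - B) by lra.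
      assert (0 <= ((bet + 1) * bet / 2 - k) * Rpower x (bet - 1)) by (apply Rmult_le_pos; lra).
      assert (0 <= (K^2/2 - B) * Rpower x (bet + 1)) by (apply Rmult_le_pos; lra).
      assert (0 <= K * (bet + 1) * Rpower x bet) by (apply Rmult_le_pos; [apply Rmult_le_pos|]; lra).
      assert (E : ((bet + 1) * bet * Rpower x (bet - 1) + 2 * K * (bet + 1) * Rpower x bet +
         K ^ 2 * Rpower x (bet + 1)) * exp (K * x) / 2 -
         exp (K * x) * (B * Rpower x (bet + 1) + k * Rpower x (bet - 1)) =
         exp (K * x) * (((bet + 1) * bet / 2 - k) * Rpower x (bet - 1) + K * (bet + 1) * Rpower x bet
          + (K^2/2 - B) * Rpower x (bet + 1))) by field.
      rewrite E. apply Rmult_le_pos; lra. }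
  unfold G in H. rewrite drho0, RInt_point in H. unfold zero in H; simpl in H. lra.
Qed.


Definition ell t := A / 2 * pw (Rmin t s0) bet.
Definition Uref t := A * pw t bet.

Definition EE (U : R -> R) t := if Rlt_dec 0 t then
   w t * (bet / 2 * U t + gam * Rpower (U t) (gam - 1))
   - gam * Rpower A (gam - 1) * w0 * Rpower t (bet - 2) else 0.
Definition gg (U : R -> R) t := if Rlt_dec 0 t then
   (c1 * Rpower t (bet - 1) + RInt (EE U) 0 t) / w t else 0.
Definition TT (U : R -> R) s := RInt (gg U) 0 s.

Definition Good (U : R -> R) :=
  (forall x, 0 < x -> continuous U x) /\ (forall x, 0 < x -> ell x <= U x) /\
  (forall x, 0 < x -> Rabs (U x - Uref x) <= 2 * C0 * rho x).

Lemma ell_pos x : 0 < x -> 0 < ell x.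
Proof.
  intros H. unfold ell. generalize A_pos s0_pos; intros.
  assert (0 < Rmin x s0) by (apply Rmin_pos; auto).
  generalize (pw_gt0 _ bet H2). intros. nra.
Qed.

Lemma ell_Uref x : 0 < x -> ell x <= Uref x.
Proof.
  intros H. unfold ell, Uref. generalize A_pos s0_pos bet_gt1; intros.
  assert (pw (Rmin x s0) bet <= pw x bet).
  { apply pw_mono; try lra. left; apply Rmin_pos; lra. apply Rmin_l. }
  generalize (pw_ge0 (Rmin x s0) bet). nra.
Qed.

Lemma R1 x : 0 < x -> Rpower (A * Rpower x bet) (gam - 1) = Rpower A (gam - 1) * Rpower x (bet - 2).
Proof.
  intros H. rewrite <- Rpower_mult_distr by (try apply A_pos; apply Rpower_pos).
  rewrite Rpower_mult, <- bet_id1. reflexivity.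
Qed.

Lemma R2 m : 0 < m -> Rpower (A / 2 * Rpower m bet) (gam - 2) = Rpower (A / 2) (gam - 2) * / m ^ 2.
Proof.
  intros H. generalize A_pos; intro.
  rewrite <- Rpower_mult_distr by (try lra; apply Rpower_pos).
  rewrite Rpower_mult. rewrite bet_id2. f_equal.
  replace (-2) with (- (2)) by ring. rewrite Rpower_Ropp, Rpower_2; auto.
Qed.

Lemma rho_small x : 0 < x -> x <= s0 -> 2 * C0 * rho x <= A / 2 * Rpower x bet.
Proof.
  intros H1 H2. unfold rho. rewrite pw_pos by auto. rewrite Rpower_S by auto.
  generalize s0_small C0_ge1 K_ge1 K_s0 (Rpower_pos x bet); intros.
  assert (exp (K * x) <= exp kap) by (apply exp_le'; nra).
  assert (x * exp (K * x) <= s0 * exp kap).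
  { apply Rmult_le_compat; try lra. left; apply exp_pos. }
  assert (2 * C0 * (x * exp (K * x)) <= A / 2) by nra.
  assert (E : 2 * C0 * (Rpower x bet * x * exp (K * x)) = Rpower x bet * (2 * C0 * (x * exp (K * x)))) by ring.
  rewrite E. rewrite (Rmult_comm (A/2)). apply Rmult_le_compat_l; lra.
Qed.

Lemma EE_pos U t : 0 < t -> EE U t = w t * (bet / 2 * U t + gam * Rpower (U t) (gam - 1))
   - gam * Rpower A (gam - 1) * w0 * Rpower t (bet - 2).
Proof. intros H; unfold EE; destruct (Rlt_dec 0 t); [auto|lra]. Qed.
Lemma EE_npos U t : t <= 0 -> EE U t = 0.
Proof. intros H; unfold EE; destruct (Rlt_dec 0 t); [lra|auto]. Qed.
Lemma gg_pos U t : 0 < t -> gg U t = (c1 * Rpower t (bet - 1) + RInt (EE U) 0 t) / w t.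
Proof. intros H; unfold gg; destruct (Rlt_dec 0 t); [auto|lra]. Qed.
Lemma gg_npos U t : t <= 0 -> gg U t = 0.
Proof. intros H; unfold gg; destruct (Rlt_dec 0 t); [lra|auto]. Qed.

Lemma EE_lip U V t d : 0 < t -> ell t <= U t -> ell t <= V t -> 0 <= d ->
  Rabs (U t - V t) <= d * rho t -> Rabs (EE U t - EE V t) <= w t * d * hh t.
Proof.
  intros Ht HU HV Hd HUV. rewrite !EE_pos by auto.
  generalize (ell_pos t Ht) (w_pos t); intros Hl Hw.
  assert (Hlip := Rpower_lip (U t) (V t) (ell t) (gam - 1) ltac:(lra) ltac:(lra) Hl HU HV).
  replace (gam - 1 - 1) with (gam - 2) in Hlip by ring.
  set (m := Rmin t s0).
  assert (Hm : 0 < m) by (apply Rmin_pos; auto using s0_pos).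
  assert (Hell : gam * (1 - gam) * Rpower (ell t) (gam - 2) = k * / m ^ 2).
  { unfold ell. fold m. rewrite pw_pos by auto. rewrite R2 by auto. unfold k. ring. }
  assert (E : w t * (bet / 2 * U t + gam * Rpower (U t) (gam - 1)) - gam * Rpower A (gam - 1) * w0 * Rpower t (bet - 2) -
   (w t * (bet / 2 * V t + gam * Rpower (V t) (gam - 1)) - gam * Rpower A (gam - 1) * w0 * Rpower t (bet - 2))
   = w t * (bet / 2 * (U t - V t) + gam * (Rpower (U t) (gam - 1) - Rpower (V t) (gam - 1)))) by ring.
  rewrite E. rewrite Rabs_mult, (Rabs_pos_eq (w t)) by lra. rewrite Rmult_assoc.
  apply Rmult_le_compat_l; [lra|].
  eapply Rle_trans. apply Rabs_triang. rewrite !Rabs_mult.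
  rewrite (Rabs_pos_eq (bet/2)) by (generalize bet_gt1; lra). rewrite (Rabs_pos_eq gam) by lra.
  assert (HM : (bet / 2 + k * / m ^ 2) * rho t <= hh t).
  { unfold rho, hh. pwpos. generalize (exp_pos (K * t)) k_pos bet_gt1; intros.
    assert (Hr : Rpower t (bet + 1) = Rpower t (bet - 1) * t ^ 2).
    { replace (bet + 1) with ((bet - 1) + 1 + 1) by ring. rewrite !Rpower_S by auto.
      replace (bet - 1 + 1) with bet by ring. ring. }
    generalize (Rpower_pos t (bet - 1)) (Rpower_pos t (bet + 1)); intros.
    unfold m. destruct (Rle_dec t s0) as [Hts|Hts].
    - rewrite Rmin_left by auto.
      assert (k * / t ^ 2 * Rpower t (bet + 1) = k * Rpower t (bet - 1)).
      { rewrite Hr. field. lra. }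
      assert (bet / 2 <= B). { unfold B. generalize s0_pos; intro. assert (0 <= k / s0 ^ 2).
        apply Rdiv_le_0_compat; nra. lra. }
      replace ((bet / 2 + k * / t ^ 2) * (Rpower t (bet + 1) * exp (K * t))) with
        (exp (K*t) * (bet/2 * Rpower t (bet+1) + k * / t ^ 2 * Rpower t (bet + 1))) by ring.
      rewrite H4. apply Rmult_le_compat_l; [lra|]. nra.
    - rewrite Rmin_right by lra.
      replace ((bet / 2 + k * / s0 ^ 2) * (Rpower t (bet + 1) * exp (K * t))) with
        (exp (K*t) * (B * Rpower t (bet+1))) by (unfold B; unfold Rdiv; ring).
      apply Rmult_le_compat_l; [lra|]. nra. }
  assert (Hrho := rho_nonneg t).
  assert (H1 : bet / 2 * Rabs (U t - V t) <= bet / 2 * (d * rho t)).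
  { apply Rmult_le_compat_l; auto. generalize bet_gt1; lra. }
  assert (H2 : gam * Rabs (Rpower (U t) (gam - 1) - Rpower (V t) (gam - 1)) <= k * / m ^ 2 * (d * rho t)).
  { eapply Rle_trans. apply Rmult_le_compat_l. lra. apply Hlip.
    rewrite <- Hell. replace (- (gam - 1)) with (1 - gam) by ring.
    generalize (Rpower_pos (ell t) (gam - 2)); intro.
    replace (gam * ((1 - gam) * Rpower (ell t) (gam - 2) * Rabs (U t - V t))) with
      ((gam * (1 - gam) * Rpower (ell t) (gam - 2)) * Rabs (U t - V t)) by ring.
    apply Rmult_le_compat_l; auto. apply Rmult_le_pos; [apply Rmult_le_pos|]; lra. }
  assert (d * ((bet / 2 + k * / m ^ 2) * rho t) <= d * hh t) by (apply Rmult_le_compat_l; auto).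
  assert (E2 : d * ((bet / 2 + k * / m ^ 2) * rho t) = bet / 2 * (d * rho t) + k * / m ^ 2 * (d * rho t)) by ring.
  lra.
Qed.


Lemma Uref_pos x : 0 < x -> Uref x = A * Rpower x bet.
Proof. intros; unfold Uref; rewrite pw_pos; auto. Qed.

Lemma EEref_eq t : 0 < t -> EE Uref t = w t * (bet / 2 * (A * Rpower t bet))
   + gam * Rpower A (gam - 1) * Rpower t (bet - 2) * (w t - w0).
Proof.
  intros Ht. rewrite EE_pos by auto. rewrite Uref_pos by auto. rewrite R1 by auto. ring.
Qed.

Lemma EEref_bound t x : 0 < t -> t <= x ->
  Rabs (EE Uref t) <= w x * (bet / 2 * A * Rpower x bet + gam * Rpower A (gam - 1) * a1 x * Rpower x (bet - 1)).
Proof.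
  intros Ht Htx. rewrite EEref_eq by auto.
  generalize (w_diff t x ltac:(lra) Htx) (w_mono t x ltac:(lra) Htx) (w_pos t) A_pos bet_gt1
    (Rpower_pos A (gam - 1)) (Rpower_pos t (bet - 2)) (Rpower_pos t bet) (Rpower_pos x bet); intros.
  assert (Ha1 : 0 < a1 x). { unfold a1. assert (0 <= nn / Rad) by (apply Rdiv_le_0_compat; lra). lra. }
  assert (Hp1 : Rpower t bet <= Rpower x bet) by (apply Rpower_le_base; lra).
  assert (Hp2 : Rpower t (bet - 1) <= Rpower x (bet - 1)) by (apply Rpower_le_base; lra).
  assert (Ht2 : Rpower t (bet - 2) * t = Rpower t (bet - 1)).
  { rewrite <- Rpower_S by auto. f_equal; ring. }
  assert (T1 : 0 <= w t * (bet / 2 * (A * Rpower t bet))).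
  { apply Rmult_le_pos; [lra|]. apply Rmult_le_pos; [lra|]. apply Rmult_le_pos; lra. }
  assert (T2 : 0 <= gam * Rpower A (gam - 1) * Rpower t (bet - 2) * (w t - w0)).
  { apply Rmult_le_pos; [|lra]. apply Rmult_le_pos; [|lra]. apply Rmult_le_pos; lra. }
  rewrite Rabs_pos_eq by lra.
  assert (B1 : w t * (bet / 2 * (A * Rpower t bet)) <= w x * (bet / 2 * A * Rpower x bet)).
  { replace (w t * (bet / 2 * (A * Rpower t bet))) with (w t * (bet / 2 * A * Rpower t bet)) by ring.
    apply Rmult_le_compat; try lra. apply Rmult_le_pos; [|lra]. apply Rmult_le_pos; lra.
    apply Rmult_le_compat_l; [apply Rmult_le_pos; lra|lra]. }
  assert (B2 : gam * Rpower A (gam - 1) * Rpower t (bet - 2) * (w t - w0) <=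
     w x * (gam * Rpower A (gam - 1) * a1 x * Rpower x (bet - 1))).
  { apply Rle_trans with (gam * Rpower A (gam - 1) * Rpower t (bet - 2) * (t * w x * a1 x)).
    apply Rmult_le_compat_l; [|lra]. apply Rmult_le_pos; [|lra]. apply Rmult_le_pos; lra.
    replace (gam * Rpower A (gam - 1) * Rpower t (bet - 2) * (t * w x * a1 x)) with
      (w x * (gam * Rpower A (gam - 1) * a1 x) * (Rpower t (bet - 2) * t)) by ring.
    rewrite Ht2.
    replace (w x * (gam * Rpower A (gam - 1) * a1 x * Rpower x (bet - 1))) with
      (w x * (gam * Rpower A (gam - 1) * a1 x) * Rpower x (bet - 1)) by ring.
    apply Rmult_le_compat_l; auto. apply Rmult_le_pos; [lra|]. apply Rmult_le_pos; [|lra]. apply Rmult_le_pos; lra. }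
  lra.
Qed.

Lemma EE_bound U : Good U -> exists M, 0 <= M /\
  forall t, 0 < t <= s0 -> Rabs (EE U t) <= M * Rpower t (bet - 1).
Proof.
  intros [Hc [Hl Hd]].
  set (M1 := w 1 * (bet / 2 * A + gam * Rpower A (gam - 1) * a1 1)).
  set (M2 := w 1 * (2 * C0) * exp kap * (B + k)).
  generalize A_pos bet_gt1 (Rpower_pos A (gam - 1)) (w_pos 1) k_pos C0_ge1 (exp_pos kap) s0_pos s0_le1; intros.
  assert (HB : 0 <= B). { unfold B. assert (0 <= k / s0 ^ 2) by (apply Rdiv_le_0_compat; nra). lra. }
  assert (Ha1 : 0 < a1 1). { unfold a1. assert (0 <= nn / Rad) by (apply Rdiv_le_0_compat; lra). lra. }
  assert (HM1 : 0 <= M1). { unfold M1. apply Rmult_le_pos; [lra|].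
    assert (0 <= gam * Rpower A (gam - 1) * a1 1) by (apply Rmult_le_pos; [apply Rmult_le_pos|]; lra). nra. }
  assert (HM2 : 0 <= M2). { unfold M2. apply Rmult_le_pos; [|lra]. apply Rmult_le_pos; [|lra]. nra. }
  exists (M1 + M2). split; [lra|].
  intros t Ht.
  assert (Ht1 : t <= 1) by lra.
  assert (Hp : Rpower t bet <= Rpower t (bet - 1)) by (apply Rpower_le_small; lra).
  assert (Hp' : Rpower t (bet + 1) <= Rpower t (bet - 1)) by (apply Rpower_le_small; lra).
  assert (Hpos := Rpower_pos t (bet - 1)).
  assert (R0 : Rabs (EE Uref t) <= M1 * Rpower t (bet - 1)).
  { eapply Rle_trans. apply (EEref_bound t t); lra.
    generalize (w_mono t 1 ltac:(lra) Ht1) (w_pos t) (Rpower_pos t bet); intros.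
    assert (a1 t <= a1 1) by (unfold a1; lra).
    assert (0 < a1 t). { unfold a1. assert (0 <= nn / Rad) by (apply Rdiv_le_0_compat; lra). lra. }
    unfold M1.
    apply Rle_trans with (w 1 * (bet / 2 * A * Rpower t (bet - 1) + gam * Rpower A (gam - 1) * a1 1 * Rpower t (bet - 1))).
    + apply Rmult_le_compat; try lra.
      * assert (0 <= bet / 2 * A * Rpower t bet) by (apply Rmult_le_pos; [apply Rmult_le_pos|]; lra).
        assert (0 <= gam * Rpower A (gam - 1) * a1 t * Rpower t (bet - 1)) by
          (apply Rmult_le_pos; [apply Rmult_le_pos; [apply Rmult_le_pos|]|]; lra).
        lra.
      * apply Rplus_le_compat. apply Rmult_le_compat_l; [apply Rmult_le_pos|]; lra.
        apply Rmult_le_compat_r; [lra|]. apply Rmult_le_compat_l; [apply Rmult_le_pos|]; lra.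
    + right; ring. }
  assert (Hdiff : Rabs (EE U t - EE Uref t) <= w t * (2 * C0) * hh t).
  { apply EE_lip; [lra | apply Hl; lra | apply ell_Uref; lra | lra | apply Hd; lra]. }
  assert (Hhh : hh t <= exp kap * (B + k) * Rpower t (bet - 1)).
  { unfold hh. pwpos. generalize K_s0 K_ge1; intros.
    assert (exp (K * t) <= exp kap) by (apply exp_le'; nra).
    assert (B * Rpower t (bet + 1) + k * Rpower t (bet - 1) <= (B + k) * Rpower t (bet - 1)).
    { assert (B * Rpower t (bet + 1) <= B * Rpower t (bet - 1)) by (apply Rmult_le_compat_l; lra). lra. }
    assert (0 <= B * Rpower t (bet + 1) + k * Rpower t (bet - 1)).
    { generalize (Rpower_pos t (bet + 1)); intro. nra. }
    apply Rle_trans with (exp kap * (B * Rpower t (bet + 1) + k * Rpower t (bet - 1))).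
    apply Rmult_le_compat_r; lra.
    rewrite Rmult_assoc. apply Rmult_le_compat_l; lra. }
  assert (Hw : w t <= w 1) by (apply w_mono; lra).
  assert (0 <= hh t). { unfold hh. generalize (pw_ge0 t (bet+1)) (pw_ge0 t (bet-1)) (exp_pos (K*t)); intros. 
    apply Rmult_le_pos; [lra|]. nra. }
  assert (w t * (2 * C0) * hh t <= M2 * Rpower t (bet - 1)).
  { unfold M2. apply Rle_trans with (w 1 * (2 * C0) * (exp kap * (B + k) * Rpower t (bet - 1))).
    apply Rmult_le_compat; try lra. generalize (w_pos t); nra. apply Rmult_le_compat_r; lra.
    right; ring. }
  replace (EE U t) with ((EE U t - EE Uref t) + EE Uref t) by ring.
  eapply Rle_trans. apply Rabs_triang. lra.
Qed.


Lemma cont_EE U : Good U -> forall t, continuous (EE U) t.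
Proof.
  intros HG t. assert (HG' := HG). destruct HG' as [Hc [Hl Hd]].
  destruct (Rlt_dec 0 t) as [Ht|Ht].
  - apply cont_ext_loc with (fun y => w y * (bet / 2 * U y + gam * Rpower (U y) (gam - 1))
       - gam * Rpower A (gam - 1) * w0 * Rpower y (bet - 2)).
    + generalize (locally_gt 0 t Ht). apply filter_imp. intros y Hy. rewrite EE_pos; auto.
    + assert (0 < U t) by (generalize (ell_pos t Ht) (Hl t Ht); lra).
      ctac. all: try lra. all: try (apply cont_w; lra). all: try (apply Hc; lra).
  - destruct (Rlt_dec t 0) as [Ht'|Ht'].
    + apply cont_ext_loc with (fun _ => 0).
      * generalize (locally_lt 0 t Ht'). apply filter_imp. intros y Hy. rewrite EE_npos; auto; lra.
      * apply cnt_const.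
    + assert (t = 0) by lra. subst t.
      destruct (EE_bound U HG) as [M [HM HMb]].
      apply (cont0_squeeze _ (bet - 1) M s0); auto.
      * generalize bet_gt1; lra.
      * apply s0_pos.
      * intros; apply EE_npos; auto.
Qed.

Lemma cont_gg U : Good U -> forall t, continuous (gg U) t.
Proof.
  intros HG t. assert (HE := cont_EE U HG).
  destruct (Rlt_dec 0 t) as [Ht|Ht].
  - apply cont_ext_loc with (fun y => (c1 * Rpower y (bet - 1) + RInt (EE U) 0 y) * / w y).
    + generalize (locally_gt 0 t Ht). apply filter_imp. intros y Hy. rewrite gg_pos; auto.
    + ctac. all: try lra. all: try (apply cont_w; lra). all: try (apply cont_RInt_all; auto).
      generalize (w_pos t); lra.
  - destruct (Rlt_dec t 0) as [Ht'|Ht'].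
    + apply cont_ext_loc with (fun _ => 0).
      * generalize (locally_lt 0 t Ht'). apply filter_imp. intros y Hy. rewrite gg_npos; auto; lra.
      * apply cnt_const.
    + assert (t = 0) by lra. subst t.
      destruct (EE_bound U HG) as [M [HM HMb]].
      generalize c1_pos w0_pos bet_gt1 s0_pos s0_le1; intros.
      apply (cont0_squeeze _ (bet - 1) ((c1 + M) / w0) s0); auto; try lra.
      * apply Rdiv_le_0_compat; lra.
      * intros; apply gg_npos; auto.
      * intros x Hx. rewrite gg_pos by lra.
        assert (Hpx := Rpower_pos x (bet - 1)).
        assert (HI : Rabs (RInt (EE U) 0 x) <= (x - 0) * (M * Rpower x (bet - 1))).
        { apply abs_RInt_le_const. lra. apply ex_RInt_all; auto.
          intros tau Htau. destruct (Rlt_dec 0 tau).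
          - eapply Rle_trans. apply HMb. lra. apply Rmult_le_compat_l; auto.
            apply Rpower_le_base; lra.
          - rewrite EE_npos by lra. rewrite Rabs_R0. apply Rmult_le_pos; lra. }
        assert (HI2 : Rabs (RInt (EE U) 0 x) <= M * Rpower x (bet - 1)).
        { eapply Rle_trans. apply HI. assert (0 <= M * Rpower x (bet - 1)) by (apply Rmult_le_pos; lra).
          nra. }
        generalize (w_mono 0 x ltac:(lra) ltac:(lra)) (w_pos x); intros. fold w0 in H4.
        unfold Rdiv. rewrite Rabs_mult, Rabs_inv, (Rabs_pos_eq (w x)) by lra.
        assert (Rabs (c1 * Rpower x (bet - 1) + RInt (EE U) 0 x) <= (c1 + M) * Rpower x (bet - 1)).
        { eapply Rle_trans. apply Rabs_triang. rewrite Rabs_mult, Rabs_pos_eq by lra.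
          rewrite (Rabs_pos_eq (Rpower x _)) by lra. lra. }
        assert (/ w x <= / w0) by (apply Rinv_le_contravar; lra).
        assert (0 <= (c1 + M) * Rpower x (bet - 1)) by (apply Rmult_le_pos; lra).
        apply Rle_trans with ((c1 + M) * Rpower x (bet - 1) * / w0).
        apply Rmult_le_compat; try lra. apply Rabs_pos. left; apply Rinv_0_lt_compat; lra.
        right; field; lra.
Qed.

Lemma der_TT U : Good U -> forall s, is_derive (TT U) s (gg U s).
Proof. intros HG s. unfold TT. apply FTC_all. apply cont_gg; auto. Qed.

Lemma cont_TT U : Good U -> forall s, continuous (TT U) s.
Proof. intros HG s. eapply isd_cont. apply der_TT; auto. Qed.

Lemma gg_nonneg U : Good U -> forall t, 0 <= gg U t.
Proof.
  intros HG t. assert (HE := cont_EE U HG). destruct HG as [Hc [Hl Hd]].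
  destruct (Rlt_dec 0 t) as [Ht|Ht]; [|rewrite gg_npos by lra; lra].
  set (F := fun x => c1 * pw x (bet - 1) + RInt (EE U) 0 x).
  assert (F 0 <= F t).
  { apply (mono_deriv F (fun x => c1 * ((bet - 1) * Rpower x (bet - 1 - 1)) + EE U x)); try lra.
    - intros x Hx. unfold F. apply cnt_plus. apply (cnt_mult (fun _ => c1)). apply cnt_const.
      apply cont_pw. generalize bet_gt1; lra. apply cont_RInt_all; auto.
    - intros x Hx. unfold F. apply isd_plus. apply isd_scal. apply is_derive_pw; lra.
      apply FTC_all; auto.
    - intros x Hx. rewrite EE_pos by lra. replace (bet - 1 - 1) with (bet - 2) by ring.
      assert (Hc1 : c1 * (bet - 1) = gam * Rpower A (gam - 1) * w0).
      { unfold c1. generalize bet_gt1; intro. field. lra. }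
      assert (HU : 0 < U x) by (generalize (ell_pos x ltac:(lra)) (Hl x ltac:(lra)); lra).
      assert (E : c1 * ((bet - 1) * Rpower x (bet - 2)) +
        (w x * (bet / 2 * U x + gam * Rpower (U x) (gam - 1)) - gam * Rpower A (gam - 1) * w0 * Rpower x (bet - 2))
        = w x * (bet / 2 * U x + gam * Rpower (U x) (gam - 1))).
      { replace (c1 * ((bet - 1) * Rpower x (bet - 2))) with ((c1 * (bet - 1)) * Rpower x (bet - 2)) by ring.
        rewrite Hc1. ring. }
      rewrite E. generalize (w_pos x) (Rpower_pos (U x) (gam - 1)) bet_gt1; intros.
      apply Rmult_le_pos; [lra|]. nra. }
  unfold F in H. rewrite pw_npos, RInt_point in H by lra. rewrite pw_pos in H by lra.
  unfold zero in H; simpl in H.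
  rewrite gg_pos by auto. apply Rdiv_le_0_compat. lra. apply w_pos.
Qed.

Lemma TT_mono U x y : Good U -> 0 <= x -> x <= y -> TT U x <= TT U y.
Proof.
  intros HG Hx Hxy. apply (mono_deriv (TT U) (gg U)); auto.
  - intros; apply cont_TT; auto.
  - intros; apply der_TT; auto.
  - intros; apply gg_nonneg; auto.
Qed.

Lemma TT0 U : TT U 0 = 0.
Proof. unfold TT. rewrite RInt_point. reflexivity. Qed.


Lemma contract U V d : Good U -> Good V -> 0 <= d ->
  (forall x, 0 < x -> Rabs (U x - V x) <= d * rho x) ->
  forall s, 0 <= s -> Rabs (TT U s - TT V s) <= d / 2 * rho s.
Proof.
  intros HU HV Hd Hb s Hs.
  assert (HEU := cont_EE U HU). assert (HEV := cont_EE V HV).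
  apply (abs_deriv_bound (fun x => TT U x - TT V x) (fun x => d / 2 * rho x)
     (fun x => gg U x - gg V x) (fun x => d / 2 * drho x)); auto.
  - rewrite !TT0; ring.
  - rewrite rho0; ring.
  - intros x _. apply cnt_minus; apply cont_TT; auto.
  - intros x _. apply cnt_mult. apply cnt_const. apply cont_rho.
  - intros x _. apply isd_minus; apply der_TT; auto.
  - intros x Hx. apply isd_scal. apply rho_der; lra.
  - intros x Hx. rewrite !gg_pos by lra.
    assert (Hwx := w_pos x).
    assert (E : (c1 * Rpower x (bet - 1) + RInt (EE U) 0 x) / w x -
                (c1 * Rpower x (bet - 1) + RInt (EE V) 0 x) / w x =
                RInt (fun y => EE U y - EE V y) 0 x / w x).
    { rewrite RInt_minus_R by (apply ex_RInt_all; auto). field. lra. }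
    rewrite E. unfold Rdiv. rewrite Rabs_mult, Rabs_inv, (Rabs_pos_eq (w x)) by lra.
    assert (H1 : Rabs (RInt (fun y => EE U y - EE V y) 0 x) <= RInt (fun y => w x * d * hh y) 0 x).
    { eapply Rle_trans. apply abs_RInt_le. lra. apply ex_RInt_all. intros; apply cnt_minus; auto.
      apply RInt_le. lra.
      apply ex_RInt_all. intros y. apply (cnt_abs (fun y => EE U y - EE V y)). apply cnt_minus; auto.
      apply ex_RInt_all. intros y. apply (cnt_mult (fun _ => w x * d)). apply cnt_const. apply cont_hh.
      intros y Hy. destruct HU as [_ [HlU HdU]]. destruct HV as [_ [HlV HdV]].
      eapply Rle_trans. apply (EE_lip U V y d); [lra | apply HlU; lra | apply HlV; lra | lra | apply Hb; lra].
      apply Rmult_le_compat_r. unfold hh. generalize (pw_ge0 y (bet+1)) (pw_ge0 y (bet-1)) (exp_pos (K*y)) k_pos; intros.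
      assert (0 <= B). { unfold B. generalize bet_gt1 s0_pos; intros. assert (0 <= k / s0^2) by (apply Rdiv_le_0_compat; nra). lra. }
      apply Rmult_le_pos; [lra|]. nra.
      apply Rmult_le_compat_r; auto. apply w_mono; lra. }
    rewrite RInt_scal_R in H1 by (apply ex_RInt_all; apply cont_hh).
    assert (H2 := hint_le x ltac:(lra)).
    assert (H3 : Rabs (RInt (fun y => EE U y - EE V y) 0 x) <= w x * d * (drho x / 2)).
    { eapply Rle_trans. apply H1. apply Rmult_le_compat_l; auto. apply Rmult_le_pos; lra. }
    apply Rle_trans with (w x * d * (drho x / 2) * / w x).
    apply Rmult_le_compat_r; auto. left; apply Rinv_0_lt_compat; lra.
    right. field. lra.
Qed.


Lemma Good_Uref : Good Uref.
Proof.
  split; [|split].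
  - intros x Hx. unfold Uref. ctac. generalize bet_gt1; lra.
  - intros; apply ell_Uref; auto.
  - intros x Hx. replace (Uref x - Uref x) with 0 by ring. rewrite Rabs_R0.
    generalize (rho_nonneg x) C0_ge1; intros. nra.
Qed.

Lemma base s : 0 <= s -> Rabs (TT Uref s - Uref s) <= C0 * rho s.
Proof.
  intros Hs. assert (HG := Good_Uref). assert (HE := cont_EE Uref HG).
  generalize bet_gt1 A_pos c1_pos w0_pos C0_ge1 K_ge1 X_nonneg; intros.
  apply (abs_deriv_bound (fun x => TT Uref x - Uref x) (fun x => C0 * rho x)
     (fun x => gg Uref x - A * (bet * Rpower x (bet - 1))) (fun x => C0 * drho x)); auto.
  - rewrite TT0. unfold Uref. rewrite pw_npos by lra. ring.
  - rewrite rho0; ring.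
  - intros x _. apply cnt_minus. apply cont_TT; auto. unfold Uref. ctac. lra.
  - intros x _. apply cnt_mult. apply cnt_const. apply cont_rho.
  - intros x Hx. apply isd_minus. apply der_TT; auto. unfold Uref. apply isd_scal. apply is_derive_pw. lra.
  - intros x Hx. apply isd_scal. apply rho_der; lra.
  - intros x Hx. rewrite gg_pos by lra.
    assert (Hwx := w_pos x).
    set (I := RInt (EE Uref) 0 x).
    assert (HI : Rabs I <= x * (w x * (bet / 2 * A * Rpower x bet + gam * Rpower A (gam - 1) * a1 x * Rpower x (bet - 1)))).
    { unfold I. eapply Rle_trans; [|right; apply (Rmult_eq_compat_r _ (x - 0) x); ring].
      apply abs_RInt_le_const. lra. apply ex_RInt_all; auto.
      intros t Ht. destruct (Rlt_dec 0 t).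
      - apply EEref_bound; lra.
      - rewrite EE_npos by lra. rewrite Rabs_R0.
        generalize (Rpower_pos x bet) (Rpower_pos x (bet-1)) (Rpower_pos A (gam - 1)); intros.
        assert (0 < a1 x). { unfold a1. assert (0 <= nn / Rad) by (apply Rdiv_le_0_compat; lra). lra. }
        apply Rmult_le_pos; [lra|].
        assert (0 <= gam * Rpower A (gam - 1) * a1 x * Rpower x (bet - 1)) by
          (apply Rmult_le_pos; [apply Rmult_le_pos; [apply Rmult_le_pos|]|]; lra).
        assert (0 <= bet / 2 * A * Rpower x bet) by (apply Rmult_le_pos; [apply Rmult_le_pos|]; lra). lra. }
    assert (HAb : A * bet = c1 / w0). { rewrite c1_eq. field. lra. }
    assert (E : (c1 * Rpower x (bet - 1) + I) / w x - A * (bet * Rpower x (bet - 1)) =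
       - (c1 / w0) * Rpower x (bet - 1) * (w x - w0) / w x + I / w x).
    { replace (A * (bet * Rpower x (bet - 1))) with ((A * bet) * Rpower x (bet - 1)) by ring.
      rewrite HAb. field. lra. }
    rewrite E.
    generalize (w_diff x x ltac:(lra) ltac:(lra)); intros Hwd.
    assert (Hpx : Rpower x bet = Rpower x (bet - 1) * x).
    { rewrite <- Rpower_S by lra. f_equal; ring. }
    generalize (Rpower_pos x (bet - 1)) (Rpower_pos x bet) (Rpower_pos A (gam - 1)); intros.
    assert (Hc1w : 0 < c1 / w0) by (apply Rdiv_lt_0_compat; lra).
    assert (T1 : Rabs (- (c1 / w0) * Rpower x (bet - 1) * (w x - w0) / w x) <= c1 / w0 * a1 x * Rpower x bet).
    { replace (- (c1 / w0) * Rpower x (bet - 1) * (w x - w0) / w x) with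
        (- ((c1 / w0) * Rpower x (bet - 1) * (w x - w0) * / w x)) by (field; lra).
      rewrite Rabs_Ropp. rewrite Rabs_pos_eq.
      2: { apply Rmult_le_pos. apply Rmult_le_pos. apply Rmult_le_pos; lra. lra.
           left; apply Rinv_0_lt_compat; lra. }
      apply Rle_trans with (c1 / w0 * Rpower x (bet - 1) * (x * w x * a1 x) * / w x).
      apply Rmult_le_compat_r. left; apply Rinv_0_lt_compat; lra.
      apply Rmult_le_compat_l. apply Rmult_le_pos; lra. lra.
      right. rewrite Hpx. field. lra. }
    assert (T2 : Rabs (I / w x) <= Rpower x bet * (bet / 2 * A * x + gam * Rpower A (gam - 1) * a1 x)).
    { unfold Rdiv. rewrite Rabs_mult, Rabs_inv, (Rabs_pos_eq (w x)) by lra.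
      apply Rle_trans with (x * (w x * (bet / 2 * A * Rpower x bet + gam * Rpower A (gam - 1) * a1 x * Rpower x (bet - 1))) * / w x).
      apply Rmult_le_compat_r; auto. left; apply Rinv_0_lt_compat; lra.
      right. rewrite Hpx. field. lra. }
    assert (Hdr : Rpower x bet * (1 + x) <= drho x).
    { unfold drho. pwpos. rewrite (Rpower_S x bet) by lra.
      assert (1 <= exp (K * x)) by (generalize (exp_ineq1_le (K * x)); nra).
      assert (Rpower x bet * (1 + x) <= (bet + 1) * Rpower x bet + K * (Rpower x bet * x)).
      { assert (Rpower x bet * x <= K * (Rpower x bet * x)) by (assert (0 <= Rpower x bet * x) by nra; nra). nra. }
      assert (0 <= (bet + 1) * Rpower x bet + K * (Rpower x bet * x)) by nra.
      nra. }
    eapply Rle_trans. apply Rabs_triang.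
    apply Rle_trans with (C0 * (Rpower x bet * (1 + x))).
    2: { apply Rmult_le_compat_l; lra. }
    assert (Hsum : c1 / w0 * a1 x * Rpower x bet + Rpower x bet * (bet / 2 * A * x + gam * Rpower A (gam - 1) * a1 x)
       = Rpower x bet * ((c1 / w0 + gam * Rpower A (gam - 1)) * a1 x + bet * A / 2 * x)) by (field; lra).
    assert (Hb2 : (c1 / w0 + gam * Rpower A (gam - 1)) * a1 x + bet * A / 2 * x <= C0 * (1 + x)).
    { unfold C0, a1. set (X := c1 / w0 + gam * Rpower A (gam - 1)).
      assert (0 <= nn / Rad) by (apply Rdiv_le_0_compat; lra).
      assert (0 <= X * (nn / Rad + Rad / 2 + 1 / 2)) by (apply Rmult_le_pos; [unfold X|]; lra).
      assert (0 <= X) by (unfold X; lra).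
      assert (0 <= X * x) by (apply Rmult_le_pos; lra).
      assert (0 <= X * (nn / Rad) * x) by (apply Rmult_le_pos; [apply Rmult_le_pos|]; lra).
      assert (0 <= X * Rad * x) by (apply Rmult_le_pos; [apply Rmult_le_pos|]; lra).
      assert (0 <= bet * A * x) by (apply Rmult_le_pos; [apply Rmult_le_pos|]; lra).
      assert (0 <= bet * A) by (apply Rmult_le_pos; lra).
      assert (0 <= X * (nn / Rad)) by (apply Rmult_le_pos; lra).
      assert (0 <= X * Rad) by (apply Rmult_le_pos; lra).
      lra. }
    assert (Rpower x bet * ((c1 / w0 + gam * Rpower A (gam - 1)) * a1 x + bet * A / 2 * x) <= Rpower x bet * (C0 * (1 + x))).
    { apply Rmult_le_compat_l; lra. }
    lra.
Qed.

Lemma step U : Good U -> (forall x, 0 < x -> Rabs (TT U x - Uref x) <= 2 * C0 * rho x) -> Good (TT U).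
Proof.
  intros HG Hb. split; [|split]; auto.
  - intros; apply cont_TT; auto.
  - assert (Hs : forall x, 0 < x -> x <= s0 -> ell x <= TT U x).
    { intros x Hx Hxs. generalize (Hb x Hx) (rho_small x Hx Hxs); intros.
      unfold ell. rewrite Rmin_left by auto. rewrite pw_pos by auto.
      apply Rabs_le_between in H. rewrite Uref_pos in H by auto. lra. }
    intros x Hx. destruct (Rle_dec x s0) as [Hxs|Hxs]; auto.
    assert (ell x = ell s0). { unfold ell. rewrite Rmin_right by lra. rewrite Rmin_right by lra. auto. }
    rewrite H. generalize s0_pos; intro.
    apply Rle_trans with (TT U s0). apply Hs; lra. apply TT_mono; auto; lra.
Qed.


Fixpoint Useq (j : nat) : R -> R := match j with O => Uref | S j' => TT (Useq j') end.

Lemma iter_props j : Good (Useq j) /\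
  (forall x, 0 < x -> Rabs (Useq (S j) x - Useq j x) <= C0 * (/ 2) ^ j * rho x) /\
  (forall x, 0 < x -> Rabs (Useq j x - Uref x) <= 2 * C0 * (1 - (/ 2) ^ j) * rho x).
Proof.
  generalize C0_ge1; intro HC.
  induction j as [|j [HG [Hs Hd]]].
  - split; [|split].
    + apply Good_Uref.
    + intros x Hx. simpl. rewrite Rmult_1_r. apply base; lra.
    + intros x Hx. simpl. replace (Uref x - Uref x) with 0 by ring. rewrite Rabs_R0. right; ring.
  - assert (Hq : 0 < (/2)^j) by (apply pow_lt; lra).
    assert (Hq1 : (/2)^j <= 1) by apply pow_half_le1.
    assert (Hd' : forall x, 0 < x -> Rabs (Useq (S j) x - Uref x) <= 2 * C0 * (1 - (/ 2) ^ S j) * rho x).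
    { intros x Hx. replace (Useq (S j) x - Uref x) with ((Useq (S j) x - Useq j x) + (Useq j x - Uref x)) by ring.
      eapply Rle_trans. apply Rabs_triang.
      generalize (Hs x Hx) (Hd x Hx); intros. simpl pow. lra. }
    assert (HG' : Good (Useq (S j))).
    { simpl. apply step; auto. intros x Hx. eapply Rle_trans. apply Hd'; auto. simpl Useq. 
      generalize (rho_nonneg x); intro. assert (0 < (/2) ^ S j) by (apply pow_lt; lra).
      apply Rmult_le_compat_r; auto. nra. }
    split; [|split]; auto.
    intros x Hx. change (Useq (S (S j)) x) with (TT (Useq (S j)) x). change (Useq (S j) x) with (TT (Useq j) x).
    replace (C0 * (/ 2) ^ S j * rho x) with ((C0 * (/2)^j) / 2 * rho x) by (simpl; field).
    apply contract; auto; try lra. apply Rmult_le_pos; lra.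
Qed.

Lemma iter_cauchy j i x : 0 < x ->
  Rabs (Useq (i + j) x - Useq j x) <= 2 * C0 * ((/ 2) ^ j - (/ 2) ^ (i + j)) * rho x.
Proof.
  intros Hx. induction i.
  - simpl. replace (Useq j x - Useq j x) with 0 by ring. rewrite Rabs_R0. right; ring.
  - replace (S i + j)%nat with (S (i + j)) by lia.
    replace (Useq (S (i + j)) x - Useq j x) with ((Useq (S (i + j)) x - Useq (i + j) x) + (Useq (i + j) x - Useq j x)) by ring.
    eapply Rle_trans. apply Rabs_triang.
    destruct (iter_props (i + j)) as [_ [Hs _]].
    generalize (Hs x Hx); intros. simpl pow. lra.
Qed.

Lemma iter_cauchy' j m x : 0 < x -> (j <= m)%nat ->
  Rabs (Useq m x - Useq j x) <= 2 * C0 * (/ 2) ^ j * rho x.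
Proof.
  intros Hx Hjm. replace m with ((m - j) + j)%nat by lia.
  eapply Rle_trans. apply iter_cauchy; auto.
  generalize (rho_nonneg x) C0_ge1 (pow_lt (/2) (m - j + j) ltac:(lra)); intros.
  apply Rmult_le_compat_r; auto. nra.
Qed.

Definition Ulim x := real (Lim_seq (fun j => Useq j x)).

Lemma Ulim_lim x : 0 < x -> is_lim_seq (fun j => Useq j x) (Ulim x).
Proof.
  intros Hx. apply cauchy_lim. intros eps Heps.
  destruct (geo_small (2 * C0 * rho x) (eps / 2)) as [N HN]. lra.
  exists N. intros n m Hn Hm.
  replace (Useq n x - Useq m x) with ((Useq n x - Useq N x) - (Useq m x - Useq N x)) by ring.
  eapply Rle_lt_trans. apply Rabs_triang. rewrite Rabs_Ropp.
  generalize (iter_cauchy' N n x Hx Hn) (iter_cauchy' N m x Hx Hm) (HN N (le_n N)); intros.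
  replace (2 * C0 * rho x * (/ 2) ^ N) with (2 * C0 * (/ 2) ^ N * rho x) in H1 by ring.
  lra.
Qed.

Lemma Ulim_bound j x : 0 < x -> Rabs (Ulim x - Useq j x) <= 2 * C0 * (/ 2) ^ j * rho x.
Proof.
  intros Hx. apply (lim_bound (fun m => Useq m x) (Ulim x) (Useq j x) _ j).
  apply Ulim_lim; auto. intros m Hm. apply iter_cauchy'; auto.
Qed.

Lemma Good_Ulim : Good Ulim.
Proof.
  generalize C0_ge1; intro HC.
  split; [|split].
  - intros x Hx. apply cont_eps. intros eps Heps.
    destruct (geo_small (2 * C0 * rho (2 * x)) (eps / 3)) as [N HN]. lra.
    specialize (HN N (le_n N)).
    destruct (iter_props N) as [[HcN _] _].
    destruct (cont_eps_inv _ x (HcN x Hx) (eps / 3)) as [d [Hd Hy]]. lra.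
    exists (Rmin d (x / 2)). split. apply Rmin_pos; lra.
    intros y Hyx.
    assert (Hyd : Rabs (y - x) < d) by (eapply Rlt_le_trans; [apply Hyx|apply Rmin_l]).
    assert (Hyx2 : Rabs (y - x) < x / 2) by (eapply Rlt_le_trans; [apply Hyx|apply Rmin_r]).
    apply Rabs_lt_between in Hyx2.
    assert (Hy0 : 0 < y) by lra.
    assert (HrY : rho y <= rho (2 * x)) by (apply rho_mono; lra).
    assert (HrX : rho x <= rho (2 * x)) by (apply rho_mono; lra).
    generalize (Ulim_bound N y Hy0) (Ulim_bound N x Hx) (Hy y Hyd); intros.
    assert (0 < (/2)^N) by (apply pow_lt; lra).
    assert (2 * C0 * (/ 2) ^ N * rho y <= 2 * C0 * rho (2 * x) * (/ 2) ^ N).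
    { replace (2 * C0 * rho (2 * x) * (/ 2) ^ N) with (2 * C0 * (/ 2) ^ N * rho (2 * x)) by ring.
      apply Rmult_le_compat_l; auto. nra. }
    assert (2 * C0 * (/ 2) ^ N * rho x <= 2 * C0 * rho (2 * x) * (/ 2) ^ N).
    { replace (2 * C0 * rho (2 * x) * (/ 2) ^ N) with (2 * C0 * (/ 2) ^ N * rho (2 * x)) by ring.
      apply Rmult_le_compat_l; auto. nra. }
    replace (Ulim y - Ulim x) with ((Ulim y - Useq N y) + (Useq N y - Useq N x) - (Ulim x - Useq N x)) by ring.
    eapply Rle_lt_trans. apply Rabs_triang. rewrite Rabs_Ropp.
    assert (Rabs ((Ulim y - Useq N y) + (Useq N y - Useq N x)) <= Rabs (Ulim y - Useq N y) + Rabs (Useq N y - Useq N x))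
      by apply Rabs_triang.
    lra.
  - intros x Hx. apply Rminus_le.
    apply (small_geo _ (2 * C0 * rho x)). intros j.
    destruct (iter_props j) as [[_ [Hl _]] _].
    generalize (Hl x Hx) (Ulim_bound j x Hx); intros.
    apply Rabs_le_between in H0. nra.
  - intros x Hx. cut (Rabs (Ulim x - Uref x) - 2 * C0 * rho x <= 0); [lra|].
    apply (small_geo _ (2 * C0 * rho x)). intros j.
    destruct (iter_props j) as [_ [_ Hd]].
    generalize (Hd x Hx) (Ulim_bound j x Hx); intros.
    assert (Rabs (Ulim x - Uref x) <= Rabs (Ulim x - Useq j x) + Rabs (Useq j x - Uref x)).
    { replace (Ulim x - Uref x) with ((Ulim x - Useq j x) + (Useq j x - Uref x)) by ring. apply Rabs_triang. }
    assert (0 < (/2)^j) by (apply pow_lt; lra).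
    generalize (rho_nonneg x); intro.
    assert (2 * C0 * (/2)^j * rho x + 2 * C0 * (1 - (/2)^j) * rho x = 2 * C0 * rho x) by ring.
    assert (0 <= 2 * C0 * rho x * (/2)^j).
    { apply Rmult_le_pos; [|lra]. apply Rmult_le_pos; lra. }
    lra.
Qed.

Lemma Ulim_fix x : 0 < x -> TT Ulim x = Ulim x.
Proof.
  intros Hx. generalize C0_ge1; intro HC.
  assert (Habs : Rabs (TT Ulim x - Ulim x) <= 0).
  { apply (small_geo _ (4 * C0 * rho x)). intros j.
    destruct (iter_props j) as [HGj _].
    assert (H1 : Rabs (TT Ulim x - TT (Useq j) x) <= (2 * C0 * (/ 2) ^ j) / 2 * rho x).
    { apply contract; auto. apply Good_Ulim. apply Rmult_le_pos. lra. left; apply pow_lt; lra.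
      intros y Hy. apply Ulim_bound; auto. lra. }
    assert (H2 := Ulim_bound (S j) x Hx). simpl Useq in H2.
    replace (TT Ulim x - Ulim x) with ((TT Ulim x - TT (Useq j) x) - (Ulim x - TT (Useq j) x)) by ring.
    eapply Rle_trans. apply Rabs_triang. rewrite Rabs_Ropp.
    simpl pow in H2. generalize (rho_nonneg x) (pow_lt (/2) j ltac:(lra)); intros.
    assert (E1 : 2 * C0 * (/ 2 * (/ 2) ^ j) * rho x = C0 * (/2)^j * rho x) by field.
    assert (E2 : 2 * C0 * (/ 2) ^ j / 2 * rho x = C0 * (/2)^j * rho x) by field.
    assert (E3 : 4 * C0 * rho x * (/ 2) ^ j = 4 * (C0 * (/2)^j * rho x)) by ring.
    assert (0 <= C0 * (/2)^j * rho x) by (apply Rmult_le_pos; [apply Rmult_le_pos|]; lra).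
    lra. }
  generalize (Rabs_pos (TT Ulim x - Ulim x)); intro.
  assert (Rabs (TT Ulim x - Ulim x) = 0) by lra.
  apply Rabs_eq_0 in H0. lra.
Qed.


Definition F2 t := bet / 2 * Ulim t + gam * Rpower (Ulim t) (gam - 1) - gg Ulim t * dPhi t.

Lemma final_s :
 (forall x, 0 < x -> ex_derive Ulim x /\ ex_derive (Derive Ulim) x /\ continuous (Derive (Derive Ulim)) x) /\
 (forall x, 0 < x -> 0 < Ulim x) /\ filterlim Ulim (at_right 0) (locally 0) /\
 filterlim (Derive Ulim) (at_right 0) (locally 0) /\
 (forall x, 0 < x -> Derive (Derive Ulim) x + dPhi x * Derive Ulim x - bet / 2 * Ulim x
     = gam * Rpower (Ulim x) (gam - 1)).
Proof.
  assert (HG := Good_Ulim). assert (HG' := HG). destruct HG' as [Hc [Hl Hd]].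
  assert (HE := cont_EE Ulim HG).
  assert (Hloc : forall x, 0 < x -> locally x (fun t => TT Ulim t = Ulim t)).
  { intros x Hx. generalize (locally_gt 0 x Hx). apply filter_imp. intros t Ht. apply Ulim_fix; auto. }
  assert (dU : forall x, 0 < x -> is_derive Ulim x (gg Ulim x)).
  { intros x Hx. apply is_derive_ext_loc with (TT Ulim). apply Hloc; auto. apply der_TT; auto. }
  assert (DU : forall x, 0 < x -> Derive Ulim x = gg Ulim x).
  { intros x Hx. apply is_derive_unique. apply dU; auto. }
  assert (dg : forall t, 0 < t -> is_derive (gg Ulim) t (F2 t)).
  { intros t Ht.
    apply is_derive_ext_loc with (fun s => (c1 * Rpower s (bet - 1) + RInt (EE Ulim) 0 s) * / w s).
    { generalize (locally_gt 0 t Ht). apply filter_imp. intros s Hs. rewrite gg_pos; auto. }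
    assert (Hw := w_pos t).
    apply isd_eq with ((c1 * ((bet - 1) * Rpower t (bet - 1 - 1)) + EE Ulim t) * / w t +
       (c1 * Rpower t (bet - 1) + RInt (EE Ulim) 0 t) * (- (w t * dPhi t) / (w t) ^ 2)).
    - apply (isd_mult (fun s => c1 * Rpower s (bet - 1) + RInt (EE Ulim) 0 s) (fun s => / w s)).
      + apply (isd_plus (fun s => c1 * Rpower s (bet - 1)) (fun s => RInt (EE Ulim) 0 s)).
        apply isd_scal. apply is_derive_Rpower; auto. apply FTC_all; auto.
      + apply (isd_inv w). apply is_derive_w; lra. lra.
    - unfold F2. rewrite gg_pos by auto. rewrite EE_pos by auto.
      replace (bet - 1 - 1) with (bet - 2) by ring.
      assert (Hc1 : c1 * (bet - 1) = gam * Rpower A (gam - 1) * w0).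
      { unfold c1. generalize bet_gt1; intro. field. lra. }
      replace (c1 * ((bet - 1) * Rpower t (bet - 2))) with ((c1 * (bet - 1)) * Rpower t (bet - 2)) by ring.
      rewrite Hc1. field. lra. }
  assert (DDU : forall t, 0 < t -> Derive (Derive Ulim) t = F2 t).
  { intros t Ht. rewrite (Derive_ext_loc (Derive Ulim) (gg Ulim)).
    apply is_derive_unique. apply dg; auto.
    generalize (locally_gt 0 t Ht). apply filter_imp. intros s Hs. apply DU; auto. }
  split; [|split; [|split; [|split]]].
  - intros x Hx. split; [|split].
    + exists (gg Ulim x). apply dU; auto.
    + exists (F2 x). apply is_derive_ext_loc with (gg Ulim).
      generalize (locally_gt 0 x Hx). apply filter_imp. intros s Hs. symmetry. apply DU; auto.
      apply dg; auto.
    + apply cont_ext_loc with F2.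
      generalize (locally_gt 0 x Hx). apply filter_imp. intros s Hs. symmetry. apply DDU; auto.
      unfold F2, dPhi. unfold Rdiv.
      assert (0 < Ulim x) by (generalize (ell_pos x Hx) (Hl x Hx); lra).
      ctac. all: try lra. all: try (apply Hc; lra). all: try (apply cont_gg; auto).
  - intros x Hx. generalize (ell_pos x Hx) (Hl x Hx); lra.
  - apply (at_right_cont (TT Ulim)). apply cont_TT; auto. apply TT0.
    intros t Ht. symmetry. apply Ulim_fix; auto.
  - apply (at_right_cont (gg Ulim)). apply cont_gg; auto. apply gg_npos; lra.
    intros t Ht. apply DU; auto.
  - intros x Hx. rewrite DDU, DU by auto. unfold F2. ring.
Qed.

End Main.

Lemma Derive_shift (f : R -> R) c r : Derive (fun x => f (x - c)) r = Derive f (r - c).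
Proof.
  unfold Derive. f_equal. f_equal. apply functional_extensionality. intros h.
  replace (r + h - c) with (r - c + h) by ring. reflexivity.
Qed.

Lemma Derive_shift_fun (f : R -> R) c : Derive (fun x => f (x - c)) = fun r => Derive f (r - c).
Proof. apply functional_extensionality. intros r. apply Derive_shift. Qed.

Lemma ex_derive_shift (f : R -> R) c r : ex_derive f (r - c) -> ex_derive (fun x => f (x - c)) r.
Proof.
  intros [l Hl]. exists (l * 1). apply (isd_comp f (fun x => x - c)). auto.
  apply isd_eq with (1 - 0). apply isd_minus. apply isd_id. apply isd_const. ring.
Qed.

Lemma cont_shift (f : R -> R) c r : continuous f (r - c) -> continuous (fun x => f (x - c)) r.
Proof.
  intros H. apply (continuous_comp (fun x => x - c) f). apply cnt_minus. apply cnt_id. apply cnt_const. auto.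
Qed.

Lemma at_right_shift (f : R -> R) c : filterlim f (at_right 0) (locally 0) ->
  filterlim (fun x => f (x - c)) (at_right c) (locally 0).
Proof.
  intros H. apply filterlim_locally. intros eps.
  apply filterlim_locally with (eps := eps) in H.
  destruct H as [d Hd]. exists d. intros y Hy Hyc.
  apply Hd. assert (Hb : Rabs (y - c) < d) by exact Hy.
  change (Rabs ((y - c) - 0) < d). rewrite Rminus_0_r. auto. lra.
Qed.

Theorem lemma6p6 (n : nat) (Rad gamma : R)
  (hn : (1 <= n)%nat) (hR : 0 < Rad) (hg0 : 0 < gamma) (hg1 : gamma < 1) :
  let beta := 2 / (2 - gamma) in
  exists U : R -> R,
    C2_on_open_right Rad U /\
    (forall r, Rad < r -> 0 < U r) /\
    filterlim U (at_right Rad) (locally 0) /\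
    filterlim (Derive U) (at_right Rad) (locally 0) /\
    (forall r, Rad < r ->
       Derive (Derive U) r + ((INR n - 1) / r + r / 2) * Derive U r
         - beta / 2 * U r
       = gamma * Rpower (U r) (gamma - 1)).
Proof.
  intros beta.
  set (nn := INR n - 1).
  assert (Hnn : 0 <= nn). { unfold nn. apply le_INR in hn. simpl in hn. lra. }
  destruct (final_s nn Rad gamma Hnn hR hg0 hg1) as [H1 [H2 [H3 [H4 H5]]]].
  set (U0 := Ulim nn Rad gamma) in *.
  exists (fun r => U0 (r - Rad)).
  unfold C2_on_open_right.
  rewrite !(Derive_shift_fun U0 Rad). rewrite !(Derive_shift_fun (Derive U0) Rad).
  split; [|split; [|split; [|split]]].
  - intros x Hx. destruct (H1 (x - Rad) ltac:(lra)) as [A1 [A2 A3]]. split; [|split].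
    + apply (ex_derive_shift U0 Rad x A1).
    + apply (ex_derive_shift (Derive U0) Rad x A2).
    + apply (cont_shift (Derive (Derive U0)) Rad x A3).
  - intros r Hr. apply H2. lra.
  - apply (at_right_shift U0 Rad H3).
  - apply (at_right_shift (Derive U0) Rad H4).
  - intros r Hr. generalize (H5 (r - Rad) ltac:(lra)). unfold dPhi, bet.
    replace (Rad + (r - Rad)) with r by ring. fold nn. unfold beta. intros E. rewrite <- E. ring.
Qed.
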